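(* Let $G$ be an $n$-node graph with arboricity $\lambda$ and maximum degree $\Delta\ge(2\lambda)^{20}$, and let $d=\Delta^{1/10}$. Let $G_0'$ be any subgraph of $G$ induced by a set of vertices (the graph at the start of a phase), and define $G_1$ as the graph obtained from $G_0'$ by removing all vertices in the $60$ lowest-index layers of the greedy-peeling $H$-partition with out-degree $d$, and for $i\ge1$ let $G_{i+1}$ be obtained from $G_i$ by removing all vertices in the $20\cdot 2^i$ lowest-index layers of the greedy-peeling $H$-partition of $G_i$ with out-degree $d$. Then for all $i\ge1$, $G_i$ contains at most $n'/\Delta^{2^i}$ nodes, where $n'=n/\Delta$.
   Context: The arboricity of a graph is the minimum number of forests into which its edges can be partitioned. An $H$-partition with out-degree $d$ is a partition of the vertices into layers $L_1,\dots,L_\ell$ such that every $v\in L_i$ has at most $d$ neighbors in $\bigcup_{j\ge i}L_j$; the greedy peeling algorithm constructs it by repeatedly, for $i=1,2,\dots$, putting all remaining vertices of remaining degree at most $d$ into $L_i$ and removing them. Layers of a graph are with respect to its own (original) edges; removing the lowest layers of the $H$-partition of a graph leaves a graph whose $H$-partition consists of the remaining layers in order. *)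

(* Defs.v *)
From mathcomp Require Import all_boot.
Set Implicit Arguments. Unset Strict Implicit. Unset Printing Implicit Defensive.

Section Graphs.
Variable V : finType.
Variable e : rel V.

Definition simple_graph := symmetric e /\ irreflexive e.

Definition forest (f : rel V) : Prop :=
  ~ exists s : seq V, [/\ uniq s, 3 <= size s & cycle f s].

Definition forest_partition (k : nat) : Prop :=
  exists c : V -> V -> 'I_k, (forall x y, c x y = c y x) /\
    forall i : 'I_k, forest (fun x y => e x y && (c x y == i)).

Definition arboricity (lam : nat) : Prop :=
  forest_partition lam /\ forall k, forest_partition k -> lam <= k.

Definition deg (v : V) : nat := #|[set u | e v u]|.
Definition maxdeg : nat := \max_(v : V) deg v.

Definition deg_in (S : {set V}) (v : V) : nat := #|[set u in S | e v u]|.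

(* One step of greedy peeling with out-degree d = Delta^(1/10):
   remove the vertices of remaining degree <= d, i.e. deg^10 <= Delta
   (for a natural number deg, deg <= Delta^(1/10) iff deg^10 <= Delta). *)
Definition peel (Delta : nat) (S : {set V}) : {set V} :=
  [set v in S | ~~ (deg_in S v ^ 10 <= Delta)].

(* Removing the k lowest-index layers of the H-partition of G[S]. *)
Definition remove_layers (Delta k : nat) (S : {set V}) : {set V} :=
  iter k (peel Delta) S.

(* phase_graph Delta S0 i = G_i, with G_0 = G_0' = G[S0],
   G_1 = G_0' minus its 60 lowest layers,
   G_{i+1} = G_i minus its 20 * 2^i lowest layers (i >= 1). *)
Fixpoint phase_graph (Delta : nat) (S0 : {set V}) (i : nat) : {set V} :=
  match i with
  | 0 => S0
  | j.+1 => remove_layers Delta (if j == 0 then 60 else 20 * 2 ^ j)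
                          (phase_graph Delta S0 j)
  end.

End Graphs.

(* Main.v *)
Require Import Defs.
From mathcomp Require Import all_boot zify.
Set Implicit Arguments. Unset Strict Implicit.

Section F.
Variable V : finType.
Variable f : rel V.
Hypothesis Sf : symmetric f.
Hypothesis If : irreflexive f.
Hypothesis Ff : forest f.

Lemma leaf (S : {set V}) : S != set0 ->
  exists2 y, y \in S & #|[set u in S | f y u]| <= 1.
Proof.
move=> S0.
case: (boolP [exists y in S, #|[set u in S | f y u]| <= 1]).
  by move/exists_inP=> [y Hy Hd]; exists y.
move/exists_inPn => H.
have ext : forall n, exists y p, [/\ uniq (y :: p), path f y p,
    all (mem S) (y :: p) & size p = n].
  elim=> [|n [y [p [Hu Hp Ha Hs]]]].
    case/set0Pn: S0 => x Hx; exists x, [::]; split=> //=; by rewrite Hx.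
  have := H y; have yS : y \in S by move: Ha => /= /andP[].
  rewrite yS -ltnNge => /(_ isT) /card_gt1P [u1 [u2 [H1 H2 H12]]].
  move: H1 H2; rewrite !inE => /andP[u1S fy1] /andP[u2S fy2].
  case: (boolP (u1 \in y :: p)) => m1; last first.
    exists u1, (y :: p); split=> //=.
    - by rewrite -/(uniq (y::p)) Hu andbT.
    - by rewrite Sf fy1.
    - by rewrite u1S.
    - by rewrite Hs.
  case: (boolP (u2 \in y :: p)) => m2; last first.
    exists u2, (y :: p); split=> //=.
    - by rewrite -/(uniq (y::p)) Hu andbT.
    - by rewrite Sf fy2.
    - by rewrite u2S.
    - by rewrite Hs.
  exfalso.
  have [u [up fyu uh]] : exists u, [/\ u \in p, f y u & u != head y p].
    have n1 : u1 != y by apply: contraTneq fy1 => ->; rewrite If.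
    have n2 : u2 != y by apply: contraTneq fy2 => ->; rewrite If.
    move: m1 m2; rewrite !inE (negbTE n1) (negbTE n2) /= => m1 m2.
    case: (eqVneq u1 (head y p)) => e1.
      exists u2; split=> //; rewrite -e1 eq_sym //.
    by exists u1.
  set k := index u p.
  have k1 : 0 < k.
    rewrite lt0n; apply: contra uh => /eqP k0.
    by rewrite -nth0 -k0 /k nth_index.
  have kp : k < size p by rewrite index_mem.
  apply: Ff; exists (y :: take k.+1 p); split.
  - move: Hu => /= /andP[yp up']; rewrite take_uniq // andbT.
    by apply: contra yp; apply: mem_take.
  - by rewrite /= size_takel.
  - rewrite /cycle rcons_path; apply/andP; split.
      by move: Hp; rewrite -{1}(cat_take_drop k.+1 p) cat_path => /andP[].
    rewrite -nth_last size_takel //= nth_take //.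
    by rewrite nth_index // Sf.
have [y [p [Hu _ Ha Hs]]] := ext #|S|.
have : size (y :: p) <= size (enum S).
  apply: uniq_leq_size => // x Hx; rewrite mem_enum.
  by move/allP: Ha => /(_ x Hx).
by rewrite -cardE /= Hs ltnn.
Qed.

Lemma card_cond (S : {set V}) (P : pred V) :
  \sum_(v in S) (P v : nat) = #|[set v in S | P v]|.
Proof.
rewrite -sum1_card.
rewrite [RHS](eq_bigl (fun v => (v \in S) && P v)); last by move=> v; rewrite inE.
by rewrite big_mkcondr /=; apply: eq_bigr => v _; case: (P v).
Qed.

Lemma forest_sum (S : {set V}) :
  \sum_(v in S) #|[set u in S | f v u]| <= 2 * #|S|.
Proof.
move: {2}#|S| (leqnn #|S|) => n; elim: n S => [|n IH] S Hn.
  move: Hn; rewrite leqn0 cards_eq0 => /eqP ->; by rewrite big_set0.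
case: (eqVneq S set0) => [->|S0]; first by rewrite big_set0.
have [y yS dy] := leaf S0.
have cS : #|S| = #|S :\ y|.+1 by rewrite (cardsD1 y) yS.
have Hl : #|S :\ y| <= n by rewrite -ltnS -cS.
have IH' := IH _ Hl.
rewrite (bigD1 y) //=.
have step : \sum_(v in S | v != y) #|[set u in S | f v u]| <=
    \sum_(v in S :\ y) (#|[set u in S :\ y | f v u]| + (f v y : nat)).
  rewrite [X in _ <= X](eq_bigl (fun v => (v \in S) && (v != y))); last first.
    by move=> v; rewrite in_setD1 andbC.
  apply: leq_sum => v /andP[vS vy].
  have -> : [set u in S | f v u] = [set u in S :\ y | f v u] :|: [set u in [set y] | f v u].
    apply/setP => u; rewrite !inE; case: (eqVneq u y) => [->|] /=; first by rewrite yS.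
    by rewrite orbF.
  rewrite cardsU (leq_trans (leq_subr _ _)) // leq_add2l.
  rewrite (_ : [set u in [set y] | f v u] = if f v y then [set y] else set0).
    by case: (f v y); rewrite ?cards1 ?cards0.
  apply/setP => u; rewrite !inE; case: (eqVneq u y) => [->|] /=.
    by case: (f v y); rewrite ?inE ?eqxx.
  by move=> uy; case: (f v y); rewrite ?inE ?(negbTE uy).
rewrite big_split /= in step.
have h2 : \sum_(v in S :\ y) (f v y : nat) <= 1.
  rewrite card_cond (leq_trans _ dy) // subset_leq_card //.
  by apply/subsetP => u; rewrite !inE Sf => /andP[/andP[_ ->] ->].
rewrite cS mulnS.
have := leq_add dy (leq_trans step (leq_add IH' h2)).
lia.
Qed.
End F.

Lemma deg_sum (V : finType) (e : rel V) (lam : nat) :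
  simple_graph e -> forest_partition e lam -> forall S : {set V},
  \sum_(v in S) deg_in e S v <= 2 * lam * #|S|.
Proof.
move=> [se ie] [c [cs Hf]] S.
have E : forall v, deg_in e S v =
    \sum_(i < lam) #|[set u in S | e v u && (c v u == i)]|.
  move=> v; rewrite /deg_in -sum1_card (partition_big (fun u => c v u) predT) //=.
  apply: eq_bigr => i _; rewrite -sum1_card; apply: eq_bigl => u.
  by rewrite !inE andbA.
rewrite (eq_bigr _ (fun v _ => E v)) exchange_big /=.
apply: leq_trans (_ : \sum_(i < lam) 2 * #|S| <= _).
  apply: leq_sum => i _.
  apply: (@forest_sum V (fun x y => e x y && (c x y == i))).
  - by move=> x y /=; rewrite se cs.
  - by move=> x /=; rewrite ie.
  - exact: Hf.
by rewrite sum_nat_const card_ord mulnA [lam * 2]mulnC.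
Qed.

Lemma peel_bound (V : finType) (e : rel V) (lam Delta : nat) :
  simple_graph e -> forest_partition e lam -> (2 * lam) ^ 20 <= Delta ->
  forall S : {set V}, #|peel e Delta S| ^ 20 * Delta <= #|S| ^ 20.
Proof.
move=> sg fp hD S.
case: (posnP Delta) => [->|Dp]; first by rewrite muln0.
set R := peel e Delta S.
have exT : exists t, Delta < t ^ 10.
  exists Delta.+1; rewrite (leq_trans (leqnn _)) //.
  by rewrite -[X in X <= _]expn1 leq_exp2l //.
case: (ex_minnP exT) => t Ht tmin.
have RS : R \subset S by apply/subsetP => v; rewrite inE => /andP[].
have h1 : #|R| * t <= \sum_(v in R) deg_in e S v.
  rewrite -sum_nat_const; apply: leq_sum => v; rewrite inE => /andP[_].
  by rewrite -ltnNge => /tmin.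
have h2 : \sum_(v in R) deg_in e S v <= \sum_(v in S) deg_in e S v.
  rewrite [X in _ <= X](big_setID R) /= (setIidPr RS); exact: leq_addr.
have h3 := leq_trans h1 (leq_trans h2 (deg_sum sg fp S)).
have h4 : (#|R| * t) ^ 20 <= Delta * #|S| ^ 20.
  apply: leq_trans (_ : (2 * lam * #|S|) ^ 20 <= _).
    by rewrite leq_exp2r.
  by rewrite expnMn leq_mul2r hD orbT.
rewrite expnMn in h4.
have h5 : Delta * Delta <= t ^ 20.
  by rewrite (_ : 20 = 10 + 10) // expnD leq_mul // ltnW.
rewrite -(leq_pmul2r Dp) -mulnA (leq_trans (leq_mul (leqnn _) h5)) //.
by rewrite (mulnC (#|S| ^ 20)).
Qed.

Lemma iter_bound (V : finType) (e : rel V) (lam Delta : nat) :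
  simple_graph e -> forest_partition e lam -> (2 * lam) ^ 20 <= Delta ->
  forall k (S : {set V}), #|remove_layers e Delta k S| ^ 20 * Delta ^ k <= #|S| ^ 20.
Proof.
move=> sg fp hD; elim=> [|k IH] S; first by rewrite muln1.
have P := peel_bound sg fp hD (iter k (peel e Delta) S).
have I := IH S; rewrite /remove_layers in I *.
rewrite iterS (expnS Delta k) mulnA.
exact: leq_trans (leq_mul P (leqnn _)) I.
Qed.

Lemma root20 a b : a ^ 20 <= b ^ 20 -> a <= b.
Proof. by rewrite leq_exp2r. Qed.

Theorem lemma5 (V : finType) (e : rel V) (lam Delta : nat) (S0 : {set V}) :
  simple_graph e -> arboricity e lam -> maxdeg e = Delta ->
  (2 * lam) ^ 20 <= Delta ->
  forall i : nat, 1 <= i ->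
    #|phase_graph e Delta S0 i| * (Delta * Delta ^ (2 ^ i)) <= #|V|.
Proof.
move=> sg [fp _] _ hD.
have IB := iter_bound sg fp hD.
elim=> [|i IH] // _.
case: (posnP i) => [->|ip].
  rewrite (_ : Delta * Delta ^ (2^1) = Delta ^ 3); last by rewrite -expnS.
  change (phase_graph e Delta S0 1) with (remove_layers e Delta 60 S0).
  apply: root20; rewrite expnMn -expnM.
  apply: leq_trans (IB 60 S0) _.
  by rewrite leq_exp2r // max_card.
have Hi := IH ip.
change (phase_graph e Delta S0 i.+1) with
  (remove_layers e Delta (if i == 0 then 60 else 20 * 2 ^ i) (phase_graph e Delta S0 i)).
rewrite (negbTE (lt0n_neq0 ip)).
set G := phase_graph e Delta S0 i in Hi *.
have H1 : #|remove_layers e Delta (20 * 2 ^ i) G| * Delta ^ (2 ^ i) <= #|G|.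
  apply: root20; rewrite expnMn -expnM (mulnC (2 ^ i) 20); exact: IB.
rewrite [2 ^ i.+1]expnS mul2n -addnn expnD mulnCA mulnA.
apply: leq_trans Hi; apply: leq_trans (leq_mul H1 (leqnn (Delta * Delta ^ 2 ^ i))).
set R := #|remove_layers _ _ _ _|; set D := Delta ^ 2 ^ i.
rewrite eq_leq //; lia.

Qed.
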